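(* Let $f:[0,1]^n\to[0,1]$ be implementable by a Bernoulli factory, and suppose that for some open face $F_{A,S,B}$ of the hypercube we have $f|_{F_{A,S,B}}\not\equiv 0$. Then there exist an integer $m\ge 0$ and a constant $c>0$ such that $f(p)\ge c\left((1-p)^A\, p^S(1-p)^S\, p^B\right)^m$ for all $p\in[0,1]^n$.
   Context: A (multiparameter) Bernoulli factory with input $(p_1,\dots,p_n)$ is a (possibly infinite) rooted binary tree in which every node has either $2$ children or $0$ children (leaf). Each internal node is labelled either by an index $i\in[n]$ or by a constant $c\in(0,1)$; each leaf is labelled $0$ or $1$. To execute it with coins $p\in[0,1]^n$, start at the root; at a node labelled $i$ draw a fresh independent Bernoulli($p_i$) sample, at a node labelled $c$ a fresh independent Bernoulli($c$) sample; move to the child corresponding to the outcome; upon reaching a leaf output its label. $f$ is implementable by a Bernoulli factory if there is such a tree which, for every $p\in[0,1]^n$, reaches a leaf almost surely and outputs $1$ with probability exactly $f(p)$. For a partition $[n]=A\sqcup S\sqcup B$, the open face is $F_{A,S,B}=\{p\in[0,1]^n: p_i=0\ (i\in A),\ 0<p_i<1\ (i\in S),\ p_i=1\ (i\in B)\}$. For $T\subseteq[n]$, $p^T=\prod_{i\in T}p_i$, $(1-p)^T=\prod_{i\in T}(1-p_i)$. $f|_X\equiv 0$ means $f$ vanishes on all of $X$. *)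

(* Defs.v *)
From HB Require Import structures.
From mathcomp Require Import all_boot all_order all_algebra.
From mathcomp Require Import all_classical all_reals all_analysis.
Set Implicit Arguments. Unset Strict Implicit. Unset Printing Implicit Defensive.
Import Order.TTheory GRing.Theory Num.Theory.
Import numFieldNormedType.Exports.
Local Open Scope ring_scope.

Inductive bf_node (R : Type) (n : nat) :=
| BLeaf of bool
| BCoin of 'I_n
| BConst of R.
Arguments BLeaf {R n}. Arguments BCoin {R n}. Arguments BConst {R n}.

(* A (possibly infinite) rooted full binary tree is encoded by a labelling of
   all finite binary words (addresses; [::] is the root, rcons s true is the
   child taken on outcome 1, rcons s false on outcome 0).  The tree consists
   of the addresses whose proper prefixes are all internal nodes; labels of
   other addresses are irrelevant. *)
Definition bf_tree (R : Type) (n : nat) := seq bool -> bf_node R n.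

Fixpoint bf_out_within (R : realType) (n : nat) (T : bf_tree R n)
    (p : 'I_n -> R) (k : nat) (s : seq bool) (b : bool) : R :=
  match T s with
  | BLeaf b' => (b' == b)%:R
  | BCoin i => match k with
               | 0 => 0
               | k'.+1 => p i * bf_out_within T p k' (rcons s true) b
                          + (1 - p i) * bf_out_within T p k' (rcons s false) b
               end
  | BConst c => match k with
               | 0 => 0
               | k'.+1 => c * bf_out_within T p k' (rcons s true) b
                          + (1 - c) * bf_out_within T p k' (rcons s false) b
               end
  end.

Definition in_cube (R : realType) (n : nat) (p : 'I_n -> R) : Prop :=
  forall i, 0 <= p i <= 1.

Definition bf_consts_ok (R : realType) (n : nat) (T : bf_tree R n) : Prop :=
  forall s c, T s = BConst c -> 0 < c < 1.

(* f is implementable by a Bernoulli factory: for every p in [0,1]^n the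
   execution halts almost surely (probability of reaching a leaf within k
   steps tends to 1) and outputs 1 with probability exactly f p. *)
Definition bf_implementable (R : realType) (n : nat)
    (f : ('I_n -> R) -> R) : Prop :=
  exists T : bf_tree R n, bf_consts_ok T /\
    forall p, in_cube p ->
      ((fun k => bf_out_within T p k [::] true
                 + bf_out_within T p k [::] false) @ \oo --> (1 : R^o))%classic
      /\ ((fun k => bf_out_within T p k [::] true) @ \oo --> f p)%classic.

Definition in_face (R : realType) (n : nat) (A S B : {set 'I_n})
    (p : 'I_n -> R) : Prop :=
  (forall i, i \in A -> p i = 0) /\
  (forall i, i \in S -> 0 < p i < 1) /\
  (forall i, i \in B -> p i = 1).

Definition is_partition3 (n : nat) (A S B : {set 'I_n}) : Prop :=
  [disjoint A & S] /\ [disjoint A & B] /\ [disjoint S & B] /\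
  A :|: S :|: B = [set: 'I_n].

(* Main.v *)
Require Import Defs.
From HB Require Import structures.
From mathcomp Require Import all_boot all_order all_algebra.
From mathcomp Require Import all_classical all_reals all_analysis.
Import Order.TTheory GRing.Theory Num.Theory.
Import numFieldNormedType.Exports.
From mathcomp Require Import ring lra.
Local Open Scope ring_scope.

Lemma bf_ge0 (R : realType) (n : nat) (T : bf_tree R n) p k s b :
  bf_consts_ok T -> in_cube p -> 0 <= bf_out_within T p k s b.
Proof.
move=> hc hp; elim: k s => [|k IH] s /=; case E: (T s) => [b'|i|c] //.
- have /andP[h0 h1] := hp i.
  by apply: addr_ge0; apply: mulr_ge0; rewrite ?IH ?subr_ge0.
- have /andP[h0 h1] := hc _ _ E.
  by apply: addr_ge0; apply: mulr_ge0; rewrite ?IH ?subr_ge0 ?ltW.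
Qed.

Arguments bf_ge0 {R n T p} k s b.

Lemma bf_mono (R : realType) (n : nat) (T : bf_tree R n) p k s b :
  bf_consts_ok T -> in_cube p ->
  bf_out_within T p k s b <= bf_out_within T p k.+1 s b.
Proof.
move=> hc hp; elim: k s => [|k IH] s.
- rewrite [X in X <= _]/=; case E: (T s) => [b'|i|c].
  + by rewrite /= E.
  + exact: (bf_ge0 1%N _ _ hc hp).
  + exact: (bf_ge0 1%N _ _ hc hp).
- rewrite [X in X <= _]/= [X in _ <= X]/=; case E: (T s) => [b'|i|c] //.
  + have /andP[h0 h1] := hp i.
    by apply: lerD; apply: ler_wpM2l; rewrite ?IH ?subr_ge0.
  + have /andP[h0 h1] := hc _ _ E.
    by apply: lerD; apply: ler_wpM2l; rewrite ?IH ?subr_ge0 ?ltW.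
Qed.

Definition Qf (R : realType) (n : nat) (A S B : {set 'I_n}) (p : 'I_n -> R) : R :=
  (\prod_(i in A) (1 - p i)) * (\prod_(i in S) (p i * (1 - p i)))
           * (\prod_(i in B) p i).
Arguments Qf {R n}.

Lemma prod01 (R : realType) (n : nat) (X : {set 'I_n}) (F : 'I_n -> R) :
  (forall i, 0 <= F i <= 1) -> 0 <= \prod_(i in X) F i <= 1.
Proof.
move=> h; apply/andP; split.
- by apply: prodr_ge0 => i _; case/andP: (h i).
- by apply: prodr_ile1 => i _.
Qed.

Lemma prod_le_term (R : realType) (n : nat) (X : {set 'I_n}) (F : 'I_n -> R) j :
  (forall i, 0 <= F i <= 1) -> j \in X -> \prod_(i in X) F i <= F j.
Proof.
move=> h hj; rewrite (bigD1 j) //=.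
have /andP[h0 h1] := h j.
have /andP[g0 g1] := @prod01 _ _ [set i in X | i != j] _ h.
have -> : \prod_(i in X | i != j) F i = \prod_(i in [set i in X | i != j]) F i.
  by apply: eq_bigl => i; rewrite inE.
by apply: ler_piMr.
Qed.

Lemma Q_facts (R : realType) (n : nat) (A S B : {set 'I_n}) (p : 'I_n -> R) :
  in_cube p ->
  [/\ 0 <= \prod_(i in A) (1 - p i) <= 1,
      0 <= \prod_(i in S) (p i * (1 - p i)) <= 1 &
      0 <= \prod_(i in B) p i <= 1].
Proof.
move=> hp; split; apply: prod01 => i; have /andP[h0 h1] := hp i.
- by rewrite subr_ge0 h1 /=; lra.
- apply/andP; split; first by rewrite mulr_ge0 // subr_ge0.
  by rewrite mulr_ile1 // ?subr_ge0 //; lra.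
- by rewrite h0.
Qed.

Lemma Q01 (R : realType) (n : nat) (A S B : {set 'I_n}) (p : 'I_n -> R) :
  in_cube p -> 0 <= Qf A S B p <= 1.
Proof.
move=> hp; have [/andP[a0 a1] /andP[b0 b1] /andP[c0 c1]] := @Q_facts _ _ A S B _ hp.
rewrite /Qf; apply/andP; split; first by rewrite !mulr_ge0.
by rewrite !mulr_ile1 // mulr_ge0.
Qed.

Lemma Q_le_p (R : realType) (n : nat) (A S B : {set 'I_n}) (p : 'I_n -> R) i :
  in_cube p -> is_partition3 A S B -> i \notin A -> Qf A S B p <= p i.
Proof.
move=> hp [_ [_ [_ hU]]] hA.
have [/andP[a0 a1] /andP[b0 b1] /andP[c0 c1]] := @Q_facts _ _ A S B _ hp.
have /andP[h0 h1] := hp i.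
have : i \in A :|: S :|: B by rewrite hU inE.
rewrite !inE (negbTE hA) /= => /orP[hS|hB]; rewrite /Qf.
- have : \prod_(i in S) (p i * (1 - p i)) <= p i * (1 - p i).
    apply: prod_le_term => // j; have /andP[g0 g1] := hp j.
    apply/andP; split; first by rewrite mulr_ge0 // subr_ge0.
    by rewrite mulr_ile1 // ?subr_ge0 //; lra.
  move=> hle.
  have e1 : p i * (1 - p i) <= p i by apply: ler_piMr => //; lra.
  have e2 : \prod_(i in A) (1 - p i) * \prod_(i in S) (p i * (1 - p i))
            <= \prod_(i in S) (p i * (1 - p i)) by apply: ler_piMl.
  have e3 : \prod_(i in A) (1 - p i) * \prod_(i in S) (p i * (1 - p i)) * \prod_(i in B) p i
       <= \prod_(i in A) (1 - p i) * \prod_(i in S) (p i * (1 - p i)).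
    by apply: ler_piMr => //; rewrite mulr_ge0.
  lra.
- have : \prod_(i in B) p i <= p i.
    by apply: prod_le_term => // j; have := hp j.
  move=> hle.
  have e3 : \prod_(i in A) (1 - p i) * \prod_(i in S) (p i * (1 - p i)) * \prod_(i in B) p i
       <= \prod_(i in B) p i.
    by apply: ler_piMl => //; rewrite mulr_ile1.
  lra.
Qed.

Lemma Q_le_1mp (R : realType) (n : nat) (A S B : {set 'I_n}) (p : 'I_n -> R) i :
  in_cube p -> is_partition3 A S B -> i \notin B -> Qf A S B p <= 1 - p i.
Proof.
move=> hp [_ [_ [_ hU]]] hB.
have [/andP[a0 a1] /andP[b0 b1] /andP[c0 c1]] := @Q_facts _ _ A S B _ hp.
have /andP[h0 h1] := hp i.
have : i \in A :|: S :|: B by rewrite hU inE.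
rewrite !inE (negbTE hB) orbF => /orP[hA|hS]; rewrite /Qf.
- have : \prod_(i in A) (1 - p i) <= 1 - p i.
    by apply: prod_le_term => // j; have /andP[g0 g1] := hp j; apply/andP; split; lra.
  move=> hle.
  have e2 : \prod_(i in A) (1 - p i) * \prod_(i in S) (p i * (1 - p i))
            <= \prod_(i in A) (1 - p i) by apply: ler_piMr.
  have e3 : \prod_(i in A) (1 - p i) * \prod_(i in S) (p i * (1 - p i)) * \prod_(i in B) p i
       <= \prod_(i in A) (1 - p i) * \prod_(i in S) (p i * (1 - p i)).
    by apply: ler_piMr => //; rewrite mulr_ge0.
  lra.
- have : \prod_(i in S) (p i * (1 - p i)) <= p i * (1 - p i).
    apply: prod_le_term => // j; have /andP[g0 g1] := hp j.
    apply/andP; split; first by rewrite mulr_ge0 // subr_ge0.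
    by rewrite mulr_ile1 // ?subr_ge0 //; lra.
  move=> hle.
  have e1 : p i * (1 - p i) <= 1 - p i by apply: ler_piMl => //; lra.
  have e2 : \prod_(i in A) (1 - p i) * \prod_(i in S) (p i * (1 - p i))
            <= \prod_(i in S) (p i * (1 - p i)) by apply: ler_piMl.
  have e3 : \prod_(i in A) (1 - p i) * \prod_(i in S) (p i * (1 - p i)) * \prod_(i in B) p i
       <= \prod_(i in A) (1 - p i) * \prod_(i in S) (p i * (1 - p i)).
    by apply: ler_piMr => //; rewrite mulr_ge0.
  lra.
Qed.

Lemma face_cube (R : realType) (n : nat) (A S B : {set 'I_n}) (p : 'I_n -> R) :
  is_partition3 A S B -> in_face A S B p -> in_cube p.
Proof.
move=> [_ [_ [_ hU]]] [hA [hS hB]] i.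
have : i \in A :|: S :|: B by rewrite hU inE.
rewrite !inE => /orP[/orP[h|h]|h].
- by rewrite hA //; apply/andP; split; lra.
- by have /andP[h0 h1] := hS i h; apply/andP; split; apply: ltW.
- by rewrite hB //; apply/andP; split; lra.
Qed.

Arguments face_cube {R n A S B p}.
Arguments Q01 {R n} A S B {p}.
Arguments Q_le_p {R n A S B p} i.
Arguments Q_le_1mp {R n A S B p} i.

Lemma pos_prod (R : realType) (a b : R) :
  0 <= a -> 0 <= b -> 0 < a * b -> 0 < a /\ 0 < b.
Proof.
move=> ha hb h; have := gt_eqF h; rewrite mulf_eq0 => /negbT; rewrite negb_or => /andP[na nb].
by rewrite !lt0r na nb ha hb.
Qed.

Arguments pos_prod {R a b}.

Lemma key (R : realType) (n : nat) (T : bf_tree R n) (A S B : {set 'I_n})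
  (p0 : 'I_n -> R) :
  bf_consts_ok T -> is_partition3 A S B -> in_face A S B p0 ->
  forall k s, 0 < bf_out_within T p0 k s true ->
  exists2 C : R, 0 < C & forall p, in_cube p ->
     C * Qf A S B p ^+ k <= bf_out_within T p k s true.
Proof.
move=> hc hpart hface.
have hp0 := face_cube hpart hface.
have [hA [hS hB]] := hface.
elim=> [|k IH] s.
- rewrite /=; case E: (T s) => [b'|i|c]; rewrite ?ltxx // => hb.
  exists 1; first exact: ltr01. move=> p hp; rewrite /= ?E.
  case: b' E hb => /= _; rewrite ?ltxx // => _; by rewrite mul1r expr0.
- move=> hb0; have hb := hb0; rewrite /= in hb; case E: (T s) hb => [b'|i|c] hb.
  + exists 1; first exact: ltr01. move=> p hp; rewrite /= ?E.
    case: b' E hb => //= _; rewrite ?ltxx // => _; rewrite mul1r.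
    by have /andP[q0 q1] := Q01 A S B hp; rewrite exprn_ile1.
  + have /andP[a0 a1] := hp0 i.
    have X0 := bf_ge0 k (rcons s true) true hc hp0.
    have Y0 := bf_ge0 k (rcons s false) true hc hp0.
    have [hX|hX] := ltP 0 (p0 i * bf_out_within T p0 k (rcons s true) true).
    * have [hi hx] := pos_prod a0 X0 hX.
      have hiA : i \notin A by apply/negP => /hA hz; move: hi; rewrite hz ltxx.
      have [C C0 hC] := IH _ hx.
      exists C => // p hp; rewrite /= E.
      have /andP[q0 q1] := Q01 A S B hp.
      have hq := Q_le_p i hp hpart hiA.
      have hC' := hC p hp.
      have Yp := bf_ge0 k (rcons s false) true hc hp.
      have /andP[b0 b1] := hp i.
      have h1 : Qf A S B p * (C * Qf A S B p ^+ k) <= p i * bf_out_within T p k (rcons s true) true.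
        by apply: ler_pM => //; rewrite mulr_ge0 ?exprn_ge0 // ltW.
      have h2 : 0 <= (1 - p i) * bf_out_within T p k (rcons s false) true.
        by rewrite mulr_ge0 // subr_ge0.
      rewrite exprS mulrCA; lra.
    * have hY : 0 < (1 - p0 i) * bf_out_within T p0 k (rcons s false) true by lra.
      have a1' : 0 <= 1 - p0 i by rewrite subr_ge0.
      have [hi hy] := pos_prod a1' Y0 hY.
      have hiB : i \notin B by apply/negP => /hB hz; move: hi; rewrite hz subrr ltxx.
      have [C C0 hC] := IH _ hy.
      exists C => // p hp; rewrite /= E.
      have /andP[q0 q1] := Q01 A S B hp.
      have hq := Q_le_1mp i hp hpart hiB.
      have hC' := hC p hp.
      have Xp := bf_ge0 k (rcons s true) true hc hp.
      have /andP[b0 b1] := hp i.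
      have h1 : Qf A S B p * (C * Qf A S B p ^+ k) <= (1 - p i) * bf_out_within T p k (rcons s false) true.
        by apply: ler_pM => //; rewrite mulr_ge0 ?exprn_ge0 // ltW.
      have h2 : 0 <= p i * bf_out_within T p k (rcons s true) true.
        by rewrite mulr_ge0.
      rewrite exprS mulrCA; lra.
  + have /andP[c0 c1] := hc _ _ E.
    have X0 := bf_ge0 k (rcons s true) true hc hp0.
    have Y0 := bf_ge0 k (rcons s false) true hc hp0.
    have [hX|hX] := ltP 0 (bf_out_within T p0 k (rcons s true) true).
    * have [C C0 hC] := IH _ hX.
      exists (c * C); first by rewrite mulr_gt0.
      move=> p hp; rewrite /= E.
      have /andP[q0 q1] := Q01 A S B hp.
      have hC' := hC p hp.
      have Yp := bf_ge0 k (rcons s false) true hc hp.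
      have h0 : 0 <= C * Qf A S B p ^+ k by rewrite mulr_ge0 ?exprn_ge0 // ltW.
      have h1 : Qf A S B p * (C * Qf A S B p ^+ k) <= C * Qf A S B p ^+ k.
        by apply: ler_piMl.
      have h3 : c * (Qf A S B p * (C * Qf A S B p ^+ k)) <= c * bf_out_within T p k (rcons s true) true.
        by apply: ler_wpM2l; [apply: ltW | apply: le_trans hC'].
      have h2 : 0 <= (1 - c) * bf_out_within T p k (rcons s false) true.
        by rewrite mulr_ge0 // subr_ge0 ltW.
      have -> : c * C * Qf A S B p ^+ k.+1 = c * (Qf A S B p * (C * Qf A S B p ^+ k)).
        by rewrite exprS; ring.
      lra.
    * have hY : 0 < (1 - c) * bf_out_within T p0 k (rcons s false) true.
        have hc0 : 0 <= c * bf_out_within T p0 k (rcons s true) true by rewrite mulr_ge0 // ltW.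
        have hc1 : c * bf_out_within T p0 k (rcons s true) true <= 0 by rewrite pmulr_rle0.
        lra.
      have c1' : 0 <= 1 - c by rewrite subr_ge0 ltW.
      have [hi hy] := pos_prod c1' Y0 hY.
      have [C C0 hC] := IH _ hy.
      exists ((1 - c) * C); first by rewrite mulr_gt0.
      move=> p hp; rewrite /= E.
      have /andP[q0 q1] := Q01 A S B hp.
      have hC' := hC p hp.
      have Xp := bf_ge0 k (rcons s true) true hc hp.
      have h0 : 0 <= C * Qf A S B p ^+ k by rewrite mulr_ge0 ?exprn_ge0 // ltW.
      have h1 : Qf A S B p * (C * Qf A S B p ^+ k) <= C * Qf A S B p ^+ k.
        by apply: ler_piMl.
      have h3 : (1 - c) * (Qf A S B p * (C * Qf A S B p ^+ k)) <= (1 - c) * bf_out_within T p k (rcons s false) true.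
        by apply: ler_wpM2l => //; apply: le_trans hC'.
      have h2 : 0 <= c * bf_out_within T p k (rcons s true) true.
        by rewrite mulr_ge0 // ltW.
      have -> : (1 - c) * C * Qf A S B p ^+ k.+1 = (1 - c) * (Qf A S B p * (C * Qf A S B p ^+ k)).
        by rewrite exprS; ring.
      lra.
Qed.

Arguments bf_mono {R n T p} k s b.

Lemma f_ge_term (R : realType) (n : nat) (T : bf_tree R n) (p : 'I_n -> R) (l : R) k :
  bf_consts_ok T -> in_cube p ->
  ((fun k => bf_out_within T p k [::] true) @ \oo --> l)%classic ->
  bf_out_within T p k [::] true <= l.
Proof.
move=> hc hp hl.
have hnd : {homo (fun k => bf_out_within T p k [::] true) : a b / (a <= b)%N >-> a <= b}.
  by apply/nondecreasing_seqP => m; apply: bf_mono.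
have := nondecreasing_cvgn_le hnd (cvgP _ hl) k.
by rewrite (cvg_lim _ hl).
Qed.

Arguments key {R n T A S B p0}.
Arguments f_ge_term {R n T p l} k.

Theorem lemma2 (R : realType) (n : nat) (f : ('I_n -> R) -> R)
    (A S B : {set 'I_n}) :
  bf_implementable f ->
  is_partition3 A S B ->
  (exists p, in_face A S B p /\ f p != 0) ->
  exists (m : nat) (c : R), 0 < c /\
    forall p : 'I_n -> R, in_cube p ->
      c * ((\prod_(i in A) (1 - p i)) * (\prod_(i in S) (p i * (1 - p i)))
           * (\prod_(i in B) p i)) ^+ m <= f p.
Proof.
move=> [T [hc hT]] hpart [p0 [hface hf0]].
have hp0 := face_cube hpart hface.
have [_ hl0] := hT p0 hp0.
have [k hk] : exists k, 0 < bf_out_within T p0 k [::] true.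
  apply: contrapT => hn.
  have hle : forall k, bf_out_within T p0 k [::] true <= 0.
    by move=> k; rewrite leNgt; apply/negP => hlt; apply: hn; exists k.
  have fle : f p0 <= 0.
    rewrite -(cvg_lim _ hl0) //; apply: limr_le; first exact: cvgP hl0.
    by near=> m; apply: hle.
  have fge : 0 <= f p0.
    rewrite -(cvg_lim _ hl0) //; apply: limr_ge; first exact: cvgP hl0.
    by near=> m; apply: bf_ge0.
  by move: hf0; rewrite eq_le fle fge.
have [C C0 hC] := key hc hpart hface k [::] hk.
exists k, C; split => // p hp.
have [_ hl] := hT p hp.
exact: le_trans (hC p hp) (f_ge_term k hc hp hl).
Unshelve. all: end_near.
Qed.
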